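(* Let $n$ be a positive integer, $0\le m\le\lfloor n/2\rfloor$ and $0\le k\le m$. Let $M^{(n-m,m)}$ be the complex vector space with basis $\{e_\sigma\}$ indexed by the $m$-element subsets $\sigma$ of $\{1,\dots,n\}$, let $b_0,\dots,b_m$ be complex numbers and let $B_{(n-m,m)}$ be the matrix (in the basis $\{e_\sigma\}$) whose $(\sigma,\tau)$ entry is $b_{\#(\sigma\cap\tau)}$. Let $\Omega=\{n-m+1,\dots,n\}$ and define the linear map $\pi:\mathbb{C}[S_n]\to M^{(n-m,m)}$ by $\pi(g)=e_{g(\Omega)}$ for $g\in S_n$. Let $T_k$ be the Young tableau of shape $(n-k,k)$ whose first row contains $1,\dots,n-k$ and whose second row contains $n-k+1,\dots,n$, with row subgroup $R(T_k)$ and column subgroup $C(T_k)$, and let $c_k=\big(\sum_{q\in C(T_k)}\operatorname{sgn}(q)q\big)\big(\sum_{p\in R(T_k)}p\big)\in\mathbb{C}[S_n]$. Then the coefficient of $e_\Omega$ in $B_{(n-m,m)}\pi(c_k)$ is $$\sum_{v=0}^{k}\sum_{w=0}^{m-k}(-1)^v\binom{k}{v}\binom{m-k}{w}\binom{n-m-v}{w}w!\binom{m-k+v}{m-k-w}(m-k-w)!\,k!\,(n-m)!\;b_{m-v-w}.$$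
   Context: $\#X$ denotes the cardinality of a finite set $X$. The row subgroup $R(T_k)$ (resp. column subgroup $C(T_k)$) consists of the permutations of $\{1,\dots,n\}$ preserving each row (resp. each column) of $T_k$ as a set. Products in the group ring are composition of permutations, $qp=q\circ p$. *)

(* Defs.v *)
From HB Require Import structures.
From mathcomp Require Import all_boot all_order all_algebra all_fingroup all_field.
Unset Printing Implicit Defensive.
Import GRing.Theory Num.Theory.
Local Open Scope ring_scope.

(* Conventions: {1,...,n} is represented by 'I_n = {0,...,n-1} (value i+1 <-> i).  Permutations: {perm 'I_n}; NOTE mathcomp's product
   (p * q)%g is "p first, then q", i.e. (p * q)%g x = q (p x), so the paper's
   q o p is (p * q)%g. *)

Definition Omega (n m : nat) : {set 'I_n} := [set i : 'I_n | n - m <= i]%N.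

Definition rowT (n k : nat) (i : 'I_n) : nat := ((n - k <= i)%N : nat).
(* column index: entry n-k+j (second row) sits in column j, entry j of row 1 in column j *)
Definition colT (n k : nat) (i : 'I_n) : nat := if (n - k <= i)%N then (i - (n - k))%N else i.

Definition rowgroup (n k : nat) : {set {perm 'I_n}} :=
  [set p : {perm 'I_n} | [forall i, rowT n k (p i) == rowT n k i]].
Definition colgroup (n k : nat) : {set {perm 'I_n}} :=
  [set q : {perm 'I_n} | [forall i, colT n k (q i) == colT n k i]].

(* Elements of C[S_n] as coefficient functions {perm 'I_n} -> algC. *)
Definition groupring (n : nat) := {perm 'I_n} -> algC.

(* c_k = (sum_{q in C} sgn(q) q) (sum_{p in R} p), product = composition q o p *)
Definition young_c (n k : nat) : groupring n := fun g =>
  \sum_(q in colgroup n k) \sum_(p in rowgroup n k)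
     ((-1) ^+ odd_perm q) * ((g == (p * q)%g)%:R).

(* M^(n-m,m): vectors are coefficient functions on subsets (only m-subsets used). *)
Definition Mvec (n : nat) := {set 'I_n} -> algC.

Definition piM (n m : nat) (a : groupring n) : Mvec n := fun sigma =>
  \sum_(g : {perm 'I_n}) a g * ((g @: Omega n m == sigma)%:R).

Definition Bmat (n m : nat) (b : nat -> algC) (v : Mvec n) : Mvec n := fun sigma =>
  \sum_(tau : {set 'I_n} | #|tau| == m) b #|sigma :&: tau| * v tau.

(* Main.v *)
Require Import Defs.
From HB Require Import structures.
From mathcomp Require Import all_boot all_order all_algebra all_fingroup all_field.
From mathcomp Require Import zify ring.
Import GRing.Theory Num.Theory.

Lemma card_ltn n c : (c <= n)%N -> #|[set i : 'I_n | (i < c)%N]| = c.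
Proof.
move=> h.
have -> : [set i : 'I_n | (i < c)%N] = widen_ord h @: [set: 'I_c].
  apply/setP=> i; rewrite inE; apply/idP/imsetP => [ic|[j _ ->]]; last by rewrite /= ltn_ord.
  by exists (Ordinal ic); rewrite ?inE //; apply: val_inj.
rewrite card_imset ?cardsT ?card_ord // => x y /(congr1 val) /= /val_inj; apply.
Qed.

Lemma card_itv n a c : (a <= c <= n)%N -> #|[set i : 'I_n | (a <= i < c)%N]| = (c - a)%N.
Proof.
case/andP=> ac cn.
have := cardsID [set i : 'I_n | (i < a)%N] [set i : 'I_n | (i < c)%N].
have -> : [set i : 'I_n | (i < c)%N] :&: [set i : 'I_n | (i < a)%N] = [set i : 'I_n | (i < a)%N].
  by apply/setP=> i; rewrite !inE; apply/idP/idP => [/andP[]//|h]; rewrite h (leq_trans h ac).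
have -> : [set i : 'I_n | (i < c)%N] :\: [set i : 'I_n | (i < a)%N] = [set i : 'I_n | (a <= i < c)%N].
  by apply/setP=> i; rewrite !inE -leqNgt andbC.
rewrite !card_ltn ?(leq_trans ac) //; lia.
Qed.

Lemma card_geq n a : (a <= n)%N -> #|[set i : 'I_n | (a <= i)%N]| = (n - a)%N.
Proof.
move=> h; rewrite -(@card_itv n a n); last by rewrite h leqnn. apply: eq_card => i; by rewrite !inE ltn_ord andbT.
Qed.


Definition Hl {T : finType} (lab : T -> nat) : {set {perm T}} :=
  [set p : {perm T} | [forall i, lab (p i) == lab i]].

Lemma HlP (T : finType) (lab : T -> nat) (p : {perm T}) :
  reflect (forall i, lab (p i) = lab i) (p \in Hl lab).
Proof. by rewrite inE; apply: (iffP forallP) => h i; apply/eqP. Qed.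

Lemma Hl_mul (T : finType) (lab : T -> nat) (p q : {perm T}) :
  p \in Hl lab -> q \in Hl lab -> (p * q)%g \in Hl lab.
Proof. by move=> /HlP hp /HlP hq; apply/HlP => i; rewrite permM hq hp. Qed.

Lemma Hl_inv (T : finType) (lab : T -> nat) (p : {perm T}) :
  p \in Hl lab -> (p^-1)%g \in Hl lab.
Proof. by move=> /HlP hp; apply/HlP => i; rewrite -{2}(permKV p i) hp. Qed.

Lemma Hl_card3 (T : finType) (lab : T -> nat) : (forall x, lab x < 3)%N ->
  #|Hl lab| = (#|[set x | lab x == 0%N]|`! * #|[set x | lab x == 1%N]|`!
               * #|[set x | lab x == 2%N]|`!)%N.
Proof.
move=> lab3.
set F0 := [set x | lab x == 0%N]; set F1 := [set x | lab x == 1%N];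
set F2 := [set x | lab x == 2%N].
pose D := setX (setX (Sym F0) (Sym F1)) (Sym F2).
pose mulf (t : {perm T} * {perm T} * {perm T}) := (t.1.1 * t.1.2 * t.2)%g.
have ev : forall t, t \in D -> forall x,
   mulf t x = if lab x == 0%N then t.1.1 x else if lab x == 1%N then t.1.2 x else t.2 x.
  case=> [[a b] c]; rewrite !inE /= => /andP[/andP[ha hb] hc] x.
  rewrite /mulf /= !permM.
  case: ifP => [h0|h0].
    have ax : a x \in F0 by rewrite (perm_closed _ ha) inE.
    rewrite (out_perm hb) ?(out_perm hc) //; move: ax; rewrite !inE => /eqP ->//.
  rewrite (out_perm ha) ?inE ?h0 //.
  case: ifP => [h1|h1].
    have bx : b x \in F1 by rewrite (perm_closed _ hb) inE.
    rewrite (out_perm hc) //; move: bx; rewrite !inE => /eqP ->//.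
  by rewrite (out_perm hb) ?inE ?h1.
have -> : Hl lab = mulf @: D.
  apply/setP => p; apply/idP/imsetP => [/HlP hp | [t tD ->]]; last first.
    apply/HlP => x; rewrite !ev //.
    move: tD; case: t => [[a b] c]; rewrite !inE /= => /andP[/andP[ha hb] hc].
    case: ifP => [/eqP h0|h0]; first by have := perm_closed x ha; rewrite !inE h0 eqxx => /eqP.
    case: ifP => [/eqP h1|h1]; first by have := perm_closed x hb; rewrite !inE h1 eqxx => /eqP.
    have h2 : lab x = 2%N by have := lab3 x; move: h0 h1; case: (lab x) => [|[|[|]]].
    by have := perm_closed x hc; rewrite !inE h2 eqxx => /eqP.
  have mk : forall l, injective (fun x => if lab x == l then p x else x).
    move=> l x y /=; case: ifP => hx; case: ifP => hy; first exact: perm_inj.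
    - by move=> e; move: hy; rewrite -e hp hx.
    - by move=> e; move: hx; rewrite e hp hy.
    - by [].
  have on : forall l, perm_on [set x | lab x == l] (perm (mk l)).
    move=> l; apply/subsetP => x; rewrite !inE permE /=; case: ifP => //.
    by rewrite eqxx.
  exists (perm (mk 0%N), perm (mk 1%N), perm (mk 2%N)).
    by rewrite !inE /= !on.
  apply/permP => x; rewrite ev; last by rewrite !inE /= !on.
  rewrite /= !permE /=.
  case: ifP => [->//|h0]; case: ifP => [->//|h1].
  have h2 : lab x = 2%N by have := lab3 x; move: h0 h1; case: (lab x) => [|[|[|]]].
  by rewrite h2 eqxx.
rewrite card_in_imset; last first.
  move=> t t' tD t'D e.
  have ex : forall x, mulf t x = mulf t' x by move=> x; rewrite e.
  clear e; move: tD t'D ex; case: t => [[a b] c]; case: t' => [[a' b'] c'] tD t'D ex.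
  have := ev _ tD; have := ev _ t'D; move: tD t'D.
  rewrite !inE /= => /andP[/andP[ha' hb'] hc'] /andP[/andP[ha hb] hc] ev' ev0.
  have E : forall x, (if lab x == 0%N then a x else if lab x == 1%N then b x else c x)
     = (if lab x == 0%N then a' x else if lab x == 1%N then b' x else c' x).
    by move=> x; rewrite -ev0 -ev' ex.
  congr (_, _, _); apply/permP => x; have := E x.
  - case: ifP => [//|h0]; rewrite (out_perm ha) ?(out_perm ha') ?inE ?h0 //.
  - case: ifP => [h0|h0]; first by rewrite (out_perm hb) ?(out_perm hb') ?inE ?(eqP h0).
    case: ifP => [//|h1]; by rewrite (out_perm hb) ?(out_perm hb') ?inE ?h1.
  - case: ifP => [h0|h0]; first by rewrite (out_perm hc) ?(out_perm hc') ?inE ?(eqP h0).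
    case: ifP => [h1|h1]; first by rewrite (out_perm hc) ?(out_perm hc') ?inE ?(eqP h1).
    by [].
by rewrite !cardsX !card_Sym.
Qed.

Local Open Scope ring_scope.

Lemma imsetM (T : finType) (p q : {perm T}) (A : {set T}) : (p * q)%g @: A = q @: (p @: A).
Proof. by rewrite -imset_comp; apply: eq_imset => x; rewrite permM. Qed.

Lemma imsetK (T : finType) (p : {perm T}) (A : {set T}) : (p^-1)%g @: (p @: A) = A.
Proof.
by rewrite -imset_comp (eq_imset (g := id)) ?imset_id // => x /=; rewrite permK.
Qed.

Lemma orbit_sum (T : finType) (lab : T -> nat) (Om : {set T}) (Z : {set {set T}})
    (F : {set T} -> algC) :
  (forall p, p \in Hl lab -> p @: Om \in Z) ->
  #|Hl lab| = (#|[set p in Hl lab | p @: Om == Om]| * #|Z|)%N ->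
  \sum_(p in Hl lab) F (p @: Om) =
    (#|[set p in Hl lab | p @: Om == Om]|)%:R * \sum_(Y in Z) F Y.
Proof.
move=> inZ cardR.
set R := Hl lab; set St := [set p in R | p @: Om == Om].
pose fib Y := [set p in R | p @: Om == Y].
have fibK : forall Y, #|fib Y| = 0%N \/ #|fib Y| = #|St|.
  move=> Y; have [->|[p0 hp0]] := set_0Vmem (fib Y); [by left; rewrite cards0|right].
  move: hp0; rewrite inE => /andP[p0R /eqP p0Y].
  have -> : fib Y = (fun s => s * p0)%g @: St.
    apply/setP => p; rewrite inE; apply/idP/imsetP => [/andP[pR /eqP pY]|[s]].
      exists (p * p0^-1)%g; last by rewrite -mulgA mulVg mulg1.
      by rewrite inE Hl_mul ?Hl_inv //= imsetM pY -p0Y imsetK.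
    rewrite inE => /andP[sR /eqP sOm] ->.
    by rewrite Hl_mul //= imsetM sOm p0Y.
  by rewrite card_imset //; apply: mulIg.
have sumfib : (\sum_(Y in Z) #|fib Y| = #|R|)%N.
  rewrite -[#|R|]sum1_card. rewrite (partition_big (fun p : {perm T} => p @: Om) (fun Y : {set T} => Y \in Z)) //=.
  by apply: eq_bigr => Y _; rewrite sum1dep_card.
have allK : forall Y, Y \in Z -> #|fib Y| = #|St|.
  have := @leqif_sum _ (mem Z) (fun Y => #|fib Y| == #|St|) (fun Y => #|fib Y|) (fun _ => #|St|).
  case.
    move=> Y _; apply: leqif_eq; by case: (fibK Y) => ->.
  move=> _; rewrite sumfib sum_nat_const cardR mulnC eqxx => /esym/forallP h Y hY.
  by have /implyP := h Y; move/(_ hY)/eqP.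
rewrite (partition_big (fun p : {perm T} => p @: Om) (fun Y : {set T} => Y \in Z)) //= mulr_sumr.
apply: eq_bigr => Y hY.
rewrite (eq_bigr (fun _ => F Y)); last by move=> p /andP[_ /eqP ->].
rewrite (eq_bigl (mem (fib Y))); last by move=> p; rewrite !inE.
by rewrite sumr_const allK // mulr_natl.
Qed.


Lemma group_sum (I : finType) (D : pred I) (f : I -> nat) N (G : nat -> algC) :
  (forall i, D i -> f i < N)%N ->
  \sum_(i | D i) G (f i) = \sum_(t < N) (#|[set i | D i & f i == t]|)%:R * G t.
Proof.
move=> hf.
rewrite (eq_bigr (fun i => \sum_(t < N) (f i == t)%:R * G t)); last first.
  move=> i Di; rewrite (bigD1 (Ordinal (hf i Di))) //= eqxx mul1r big1 ?addr0 //.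
  move=> t /negbTE; rewrite -val_eqE /= eq_sym => ->; by rewrite mul0r.
rewrite exchange_big /=; apply: congr_big => // t _.
rewrite -big_distrl /=; congr (_ * _).
rewrite -natr_sum; congr (_%:R).
rewrite -sum1dep_card [LHS]big_mkcond [RHS]big_mkcond /=; apply: eq_bigr => i _.
by case: (D i); case: (f i == t).
Qed.

Lemma Zsum (T : finType) (S : {set T}) m (G : {set T} -> algC) :
  (#|S| <= m)%N ->
  \sum_(Y in [set Y : {set T} | (S \subset Y) && (#|Y| == m)]) G Y =
  \sum_(X in [set X : {set T} | (X \subset ~: S) && (#|X| == m - #|S|)%N]) G (S :|: X).
Proof.
move=> Sm.
have -> : [set Y : {set T} | (S \subset Y) && (#|Y| == m)] =
   (fun X => S :|: X) @: [set X : {set T} | (X \subset ~: S) && (#|X| == m - #|S|)%N].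
  apply/setP => Y; rewrite inE; apply/idP/imsetP => [/andP[SY /eqP cY]|[X]].
    exists (Y :\: S); last by apply/setP => x; rewrite !inE; case xS: (x \in S); rewrite /= ?(subsetP SY x xS).
    rewrite inE cardsD (setIidPr SY) cY eqxx andbT.
    by apply/subsetP => x; rewrite !inE => /andP[].
  rewrite inE => /andP[XS /eqP cX] ->.
  rewrite subsetUl /= cardsU cX.
  have -> : S :&: X = set0.
    apply/setP => x; rewrite !inE; apply/negbTE/negP => /andP[xS xX].
    by move: (subsetP XS x xX); rewrite inE xS.
  by rewrite cards0 subn0; apply/eqP; lia.
rewrite big_imset //= => X X'; rewrite !inE => /andP[XS _] /andP[X'S _] e.
have dX : forall Z : {set T}, Z \subset ~: S -> (S :|: Z) :\: S = Z.
  move=> Z ZS; apply/setP => x; rewrite !inE; case xZ: (x \in Z); rewrite ?andbF ?orbF ?orbT ?andbT ?andNb //.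
  by move: (subsetP ZS x xZ); rewrite inE.
by rewrite -(dX X XS) -(dX X' X'S) e.
Qed.


Ltac finb := intros; repeat match goal with
 | H : is_true true -> _ |- _ => specialize (H isT)
 | H : is_true (_ && _) |- _ => case/andP: H => ? ?
 | H : is_true false |- _ => discriminate H
 end; try done.

Lemma count_split (T : finType) (U W : {set T}) s t : W \subset U -> (t <= s)%N ->
  #|[set X : {set T} | (X \subset U) && (#|X| == s) & #|X :&: W| == t]| =
  ('C(#|W|, t) * 'C(#|U| - #|W|, s - t))%N.
Proof.
move=> WU ts.
pose D1 := [set P : {set T} | (P \subset W) && (#|P| == t)].
pose D2 := [set Q : {set T} | (Q \subset U :\: W) && (#|Q| == s - t)%N].
have capP : forall P Q : {set T}, P \subset W -> Q \subset U :\: W -> (P :|: Q) :&: W = P.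
  move=> P Q hP hQ; apply/setP => x; rewrite !inE.
  move: (subsetP hP x) (subsetP hQ x); rewrite !inE.
  by case: (x \in P); case: (x \in Q); case: (x \in W); case: (x \in U); finb.
have difP : forall P Q : {set T}, P \subset W -> Q \subset U :\: W -> (P :|: Q) :\: W = Q.
  move=> P Q hP hQ; apply/setP => x; rewrite !inE.
  move: (subsetP hP x) (subsetP hQ x); rewrite !inE.
  by case: (x \in P); case: (x \in Q); case: (x \in W); case: (x \in U); finb.
have -> : [set X : {set T} | (X \subset U) && (#|X| == s) & #|X :&: W| == t] =
    (fun PQ => PQ.1 :|: PQ.2) @: setX D1 D2.
  apply/setP => X; rewrite inE; apply/idP/imsetP => [/andP[/andP[XU /eqP cX] /eqP cXW]|].
    exists (X :&: W, X :\: W).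
      rewrite !inE /= cXW eqxx subsetIr /= cardsD cX cXW eqxx andbT.
      apply/subsetP => x; rewrite !inE => /andP[-> xX] /=; exact: (subsetP XU).
    by apply/setP => x; rewrite !inE /=; case: (x \in W); case: (x \in X).
  case=> [[P Q]]; rewrite !inE /= => /andP[/andP[hP /eqP cP] /andP[hQ /eqP cQ]] ->.
  rewrite capP // cP eqxx andbT.
  have PQ0 : P :&: Q = set0.
    apply/setP => x; rewrite !inE; move: (subsetP hP x) (subsetP hQ x); rewrite !inE.
    by case: (x \in P); case: (x \in Q); case: (x \in W); case: (x \in U); finb.
  rewrite cardsU PQ0 cards0 subn0 cP cQ subnKC // eqxx andbT.
  apply/subsetP => x; rewrite !inE => /orP[xP|xQ].
    exact: (subsetP WU x (subsetP hP x xP)).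
  by move: (subsetP hQ x xQ); rewrite !inE => /andP[].
rewrite card_in_imset; last first.
  move=> [P Q] [P' Q']; rewrite !inE /= => /andP[/andP[hP _] /andP[hQ _]] /andP[/andP[hP' _] /andP[hQ' _]] e.
  have e1 : P = P' by rewrite -(capP P Q) // e capP.
  have e2 : Q = Q' by rewrite -(difP P Q) // e difP.
  by rewrite e1 e2.
rewrite cardsX !cards_draws cardsD (setIidPr WU) //.
Qed.


Definition Sset (n k : nat) : {set 'I_n} := [set i : 'I_n | (n - k <= i)%N].
Definition lab3 (n m k : nat) (i : 'I_n) : nat := ((i \in Omega n m) + (n - k <= i))%N.

Lemma card_Om n m : (m <= n)%N -> #|Omega n m| = m.
Proof. by move=> h; rewrite /Omega card_geq ?leq_subr //; lia. Qed.

Lemma card_S n k : (k <= n)%N -> #|Sset n k| = k.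
Proof. by move=> h; rewrite /Sset card_geq ?leq_subr //; lia. Qed.

Lemma rowgroupE n k : rowgroup n k = Hl (rowT n k).
Proof. by []. Qed.

Lemma card_R n k : (k <= n)%N -> #|rowgroup n k| = ((n - k)`! * k`!)%N.
Proof.
move=> kn; rewrite rowgroupE Hl_card3; last by move=> x; rewrite /rowT; case: (n - k <= x)%N.
have -> : [set x : 'I_n | rowT n k x == 0%N] = [set x : 'I_n | (x < n - k)%N].
  by apply/setP => x; rewrite !inE /rowT ltnNge; case: (_ <= _)%N.
have -> : [set x : 'I_n | rowT n k x == 1%N] = Sset n k.
  by apply/setP => x; rewrite !inE /rowT; case: (_ <= _)%N.
have -> : [set x : 'I_n | rowT n k x == 2%N] = set0.
  by apply/setP => x; rewrite !inE /rowT; case: (_ <= _)%N.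
by rewrite card_ltn ?leq_subr // card_S // cards0 muln1.
Qed.

Lemma StabE n m k : (k <= m)%N -> (m <= n)%N ->
  [set p in rowgroup n k | p @: Omega n m == Omega n m] = Hl (lab3 n m k).
Proof.
move=> km mn.
have SO : forall x : 'I_n, (n - k <= x)%N -> x \in Omega n m.
  move=> x h; rewrite inE; lia.
have e2 : forall x : 'I_n, (n - k <= x)%N = (lab3 n m k x == 2%N).
  move=> x; rewrite /lab3; case h: (n - k <= x)%N; first by rewrite SO.
  by case: (x \in Omega n m).
have e0 : forall x : 'I_n, (x \in Omega n m) = (lab3 n m k x != 0%N).
  move=> x; rewrite /lab3; case h: (n - k <= x)%N; first by rewrite SO.
  by case: (x \in Omega n m).
apply/setP => p; rewrite inE; apply/andP/idP => [[/HlP hR /eqP hO]|/HlP h3].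
  apply/HlP => x.
  have b1 : (p x \in Omega n m) = (x \in Omega n m).
    by rewrite -{1}hO mem_imset //; apply: perm_inj.
  have b2 : (n - k <= p x)%N = (n - k <= x)%N.
    by have := hR x; rewrite /rowT; do 2 case: (_ <= _)%N.
  by rewrite /lab3 b1 b2.
split.
  apply/HlP => x; rewrite /rowT !e2 h3 //.
rewrite eqEcard card_imset ?leqnn ?andbT; last exact: perm_inj.
apply/subsetP => y /imsetP[x xO ->]; by rewrite e0 h3 -e0.
Qed.

Lemma card_Stab n m k : (k <= m)%N -> (m <= n)%N ->
  #|[set p in rowgroup n k | p @: Omega n m == Omega n m]| = ((n - m)`! * (m - k)`! * k`!)%N.
Proof.
move=> km mn; rewrite StabE // Hl_card3; last first.
  by move=> x; rewrite /lab3; case: (x \in Omega n m); case: (n - k <= x)%N.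
have SO : forall x : 'I_n, (n - k <= x)%N -> x \in Omega n m.
  move=> x h; rewrite inE; lia.
have -> : [set x : 'I_n | lab3 n m k x == 0%N] = [set x : 'I_n | (x < n - m)%N].
  apply/setP => x; rewrite !inE /lab3 inE ltnNge.
  case h: (n - k <= x)%N; last by case: (_ <= _)%N.
  by move: (SO x h); rewrite inE => ->.
have -> : [set x : 'I_n | lab3 n m k x == 1%N] = [set x : 'I_n | (n - m <= x < n - k)%N].
  apply/setP => x; rewrite !inE /lab3 inE ltnNge.
  case h: (n - k <= x)%N; last by case: (_ <= _)%N.
  by move: (SO x h); rewrite inE => ->.
have -> : [set x : 'I_n | lab3 n m k x == 2%N] = Sset n k.
  apply/setP => x; rewrite !inE /lab3.
  case h: (n - k <= x)%N; first by move: (SO x h) => ->.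
  by case: (_ \in _).
rewrite card_ltn ?leq_subr // card_itv ?card_S //; last by apply/andP; split; lia.
  by have -> : (n - k - (n - m) = m - k)%N by lia.
lia.
Qed.


Lemma card_notS n k : (k <= n)%N -> #|~: Sset n k| = (n - k)%N.
Proof. by move=> h; have := cardsC (Sset n k); rewrite card_S // card_ord; lia. Qed.

Lemma sumR n m k (F : {set 'I_n} -> algC) : (k <= m)%N -> (m + m <= n)%N ->
  \sum_(p in rowgroup n k) F (p @: Omega n m) =
  ((n - m)`! * (m - k)`! * k`!)%N%:R *
    \sum_(X in [set X : {set 'I_n} | (X \subset ~: Sset n k) && (#|X| == m - k)%N])
       F (Sset n k :|: X).
Proof.
move=> km mmn.
have mn : (m <= n)%N by lia.
have kn : (k <= n)%N by lia.
set Z := [set Y : {set 'I_n} | (Sset n k \subset Y) && (#|Y| == m)].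
have cS := @card_S n k kn.
have cZ : #|Z| = 'C(n - k, m - k).
  have := @Zsum _ (Sset n k) m (fun _ => (1 : algC)); rewrite cS => /(_ km).
  rewrite !sumr_const => /eqP; rewrite eqr_nat => /eqP ->.
  by rewrite cards_draws card_notS.
rewrite rowgroupE (@orbit_sum _ _ _ Z).
- rewrite -rowgroupE card_Stab // -cS Zsum ?cS //.
- move=> p /HlP hp; rewrite inE card_imset ?card_Om ?eqxx ?andbT //; last exact: perm_inj.
  apply/subsetP => s; rewrite inE => hs.
  rewrite -(permKV p s); apply: imset_f; rewrite inE.
  have := hp (p^-1 s)%g; rewrite permKV /rowT hs.
  case h: (n - k <= _)%N => // _; lia.
- rewrite -rowgroupE card_Stab // card_R // cZ.
  rewrite -(bin_fact (n := (n - k)%N) (m := (m - k)%N)); last by lia.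
  have -> : (n - k - (m - k) = n - m)%N by lia.
  by lia.
Qed.


Definition upo n k (x : 'I_n) : 'I_n := insubd x (x + (n - k))%N.
Definition sho n k (x : 'I_n) : 'I_n := insubd x (x - (n - k))%N.
Definition fJ n k (J : {set 'I_n}) (x : 'I_n) : 'I_n :=
  if [&& (k + k <= n)%N, (x < k)%N & x \in J] then upo n k x
  else if [&& (k + k <= n)%N, (n - k <= x)%N & sho n k x \in J] then sho n k x else x.

Lemma val_upo n k (y : 'I_n) : (y < k)%N -> (k + k <= n)%N -> nat_of_ord (upo n k y) = (y + (n - k))%N.
Proof. by move=> h1 h2; rewrite val_insubd ifT //; lia. Qed.

Arguments val_upo {n k y}.

Lemma val_sho n k (y : 'I_n) : nat_of_ord (sho n k y) = (y - (n - k))%N.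
Proof. by rewrite val_insubd ifT //; have := ltn_ord y; lia. Qed.

Lemma fJK n k J : involutive (fJ n k J).
Proof.
move=> x; rewrite {2}/fJ.
case A: [&& (k + k <= n)%N, (x < k)%N & x \in J].
  move: (A) => /and3P[h1 h2 h3].
  have vy := val_upo h2 h1.
  rewrite /fJ h1 /= ifF; last by rewrite vy; lia.
  have sy : sho n k (upo n k x) = x by apply: val_inj; rewrite /= val_sho vy; lia.
  by rewrite sy h3 ifT // vy; lia.
case B: [&& (k + k <= n)%N, (n - k <= x)%N & sho n k x \in J].
  move: (B) => /and3P[h1 h2 h3].
  have vy := val_sho n k x.
  have yk : (sho n k x < k)%N by rewrite vy; have := ltn_ord x; lia.
  rewrite /fJ h1 yk h3 /=; apply: val_inj; rewrite /= val_upo // vy; lia.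
by rewrite /fJ A B.
Qed.

Definition qJ n k J : {perm 'I_n} := perm (can_inj (fJK n k J)).

Lemma qJE n k J x : qJ n k J x = fJ n k J x.
Proof. by rewrite permE. Qed.

Lemma qJ_col n k J : qJ n k J \in colgroup n k.
Proof.
rewrite inE; apply/forallP => x; rewrite qJE /fJ /colT.
case A: [&& (k + k <= n)%N, (x < k)%N & x \in J].
  move/and3P: A => [h1 h2 h3]; rewrite val_upo // ifT; last by lia.
  by rewrite ifF; [apply/eqP; lia | lia].
case B: [&& (k + k <= n)%N, (n - k <= x)%N & sho n k x \in J].
  move/and3P: B => [h1 h2 h3]; rewrite val_sho h2 ifF; first by apply/eqP.
  have := ltn_ord x; lia.
by [].
Qed.

Definition Jof n k (q : {perm 'I_n}) : {set 'I_n} := [set j : 'I_n | (j < k)%N && (q j != j)].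

Lemma Jof_qJ n k (J : {set 'I_n}) : (0 < n)%N -> (k + k <= n)%N -> J \subset [set j : 'I_n | (j < k)%N] ->
  Jof n k (qJ n k J) = J.
Proof.
move=> n0 kk JL; apply/setP => j; rewrite inE qJE /fJ.
case jk: (j < k)%N; last first.
  by apply/esym/negbTE/negP => /(subsetP JL); rewrite inE jk.
case jJ: (j \in J); rewrite /= kk /=.
  rewrite -val_eqE /= val_upo //; apply/eqP; lia.
by rewrite ifF ?eqxx //; apply/negbTE; rewrite negb_and; apply/orP; left; rewrite -ltnNge; lia.
Qed.

Lemma col_qJ n k q : (0 < n)%N -> (k + k <= n)%N -> q \in colgroup n k ->
  q = qJ n k (Jof n k q).
Proof.
move=> n0 kk; rewrite inE => /forallP hq.
have cq : forall x, colT n k (q x) = colT n k x by move=> x; apply/eqP.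
have qv : forall x : 'I_n, (x < n - k)%N -> nat_of_ord (q x) = x \/ nat_of_ord (q x) = (x + (n - k))%N.
  move=> x xl; have := cq x; rewrite /colT (ifF _ _ (_ : (n - k <= x)%N = false)); last by lia.
  by case: ifP => h e; [right | left]; rewrite /=; lia.
have qv2 : forall x : 'I_n, (n - k <= x)%N -> nat_of_ord (q x) = x \/ nat_of_ord (q x) = (x - (n - k))%N.
  move=> x xl; have := cq x; rewrite /colT xl.
  case: ifP => h e; [left | right]; rewrite /=; lia.
apply/permP => x; rewrite qJE /fJ kk /= !inE.
have xn := ltn_ord x.
case xk: (x < k)%N => /=.
  have [e|e] := qv x ltac:(lia).
    have -> : q x = x by apply: val_inj.
    rewrite eqxx /= ifF //; apply/negbTE; rewrite negb_and; apply/orP; left; rewrite -ltnNge; lia.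
  rewrite ifT; last by apply/negP => /eqP ex; move: e; rewrite ex /=; lia.
  by apply: val_inj; rewrite /= val_upo.
case xl: (n - k <= x)%N => /=; last first.
  have [e|e] := qv x ltac:(lia).
    by apply: val_inj.
  by have := ltn_ord (q x); lia.
have sk : (sho n k x < k)%N by rewrite val_sho; lia.
rewrite sk /=.
have xs : x != sho n k x by rewrite -val_eqE /= val_sho; apply/eqP; lia.
have [e|e] := qv2 x xl.
  have qxx : q x = x by apply: val_inj.
  have qs : q (sho n k x) = sho n k x.
    have [e'|e'] := qv (sho n k x) ltac:(rewrite val_sho; lia).
      by apply: val_inj.
    have : q (sho n k x) = q x by apply: val_inj; rewrite /= e' e val_sho; lia.
    by move/perm_inj => ex; move: xs; rewrite ex eqxx.
  by rewrite qs eqxx.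
have qxs : q x = sho n k x by apply: val_inj; rewrite /= e val_sho.
rewrite ifT; first by [].
apply/negP => /eqP qs.
have : x = sho n k x by apply: (@perm_inj _ q); rewrite qxs qs.
by move/eqP; rewrite (negbTE xs).
Qed.


Lemma qJ_step n k (J : {set 'I_n}) j : (0 < n)%N -> (k + k <= n)%N ->
  J \subset [set j : 'I_n | (j < k)%N] -> j \in J ->
  qJ n k J = (qJ n k (J :\ j) * tperm j (upo n k j))%g.
Proof.
move=> n0 kk JL jJ.
have jk : (j < k)%N by move: (subsetP JL j jJ); rewrite inE.
have uj : nat_of_ord (upo n k j) = (j + (n - k))%N by rewrite val_upo.
have ju : j != upo n k j by rewrite -val_eqE /= uj; apply/eqP; lia.
have suj : sho n k (upo n k j) = j by apply: val_inj; rewrite /= val_sho uj; lia.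
set J' := J :\ j.
have qJ'j : qJ n k J' j = j.
  rewrite qJE /fJ !inE eqxx /= !andbF /=.
  have -> : (n - k <= j)%N = false by apply/negbTE; rewrite -ltnNge; lia.
  by rewrite /= andbF.
have qJ'u : qJ n k J' (upo n k j) = upo n k j.
  rewrite qJE /fJ.
  have -> : (upo n k j < k)%N = false by apply/negbTE; rewrite -leqNgt uj; lia.
  by rewrite /= andbF suj !inE eqxx /= !andbF.
apply/permP => x; rewrite permM.
have [->|xj] := eqVneq x j.
  by rewrite qJ'j tpermL qJE /fJ kk jk jJ.
have [->|xu] := eqVneq x (upo n k j).
  rewrite qJ'u tpermR qJE /fJ kk.
  have -> : (upo n k j < k)%N = false by apply/negbTE; rewrite -leqNgt uj; lia.
  by rewrite /= uj suj jJ ifT //; lia.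
have e1 : (x \in J') = (x \in J) by rewrite in_setD1 xj.
have e2 : (n - k <= x)%N -> (sho n k x \in J') = (sho n k x \in J).
  move=> h; rewrite in_setD1 (_ : sho n k x != j) //.
  apply: (contraNneq _ xu) => E; apply/eqP; apply: val_inj; rewrite /= uj -E val_sho; have := ltn_ord x; lia.
have qq : qJ n k J x = qJ n k J' x.
  rewrite !qJE /fJ e1; case h: (n - k <= x)%N; last by [].
  by rewrite e2.
rewrite qq tpermD //.
  by apply: contraNneq xj => E; apply/eqP; apply: (@perm_inj _ (qJ n k J')); rewrite -E qJ'j.
by apply: contraNneq xu => E; apply/eqP; apply: (@perm_inj _ (qJ n k J')); rewrite -E qJ'u.
Qed.

Lemma qJ_odd n k (J : {set 'I_n}) : (0 < n)%N -> (k + k <= n)%N ->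
  J \subset [set j : 'I_n | (j < k)%N] -> odd_perm (qJ n k J) = odd #|J|.
Proof.
move=> n0 kk.
suff H : forall c (J : {set 'I_n}), #|J| = c -> J \subset [set j : 'I_n | (j < k)%N] ->
    odd_perm (qJ n k J) = odd c by move=> JL; apply: H.
elim=> [|c IH] {}J cJ JL.
  have -> : J = set0 by apply: cards0_eq.
  have -> : qJ n k set0 = 1%g.
    by apply/permP => x; rewrite perm1 qJE /fJ !inE !andbF.
  by rewrite odd_perm1.
have [j jJ] : exists j, j \in J.
  by apply/set0Pn; apply/negP => /eqP J0; move: cJ; rewrite J0 cards0.
have jk : (j < k)%N by move: (subsetP JL j jJ); rewrite inE.
rewrite (@qJ_step n k J j n0 kk JL jJ) odd_permM IH; last first.
- by apply: subset_trans JL; apply: subD1set.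
- by move: cJ; rewrite (cardsD1 j) jJ => -[].
rewrite odd_tperm.
have -> : j != upo n k j by rewrite -val_eqE /= val_upo //; apply/eqP; lia.
by rewrite /= addbT.
Qed.


Definition Wset n m k (J : {set 'I_n}) : {set 'I_n} :=
  [set x : 'I_n | (x < n - k)%N && ((x \in J) || (n - m <= x)%N)].

Lemma memq n k J (A : {set 'I_n}) y : (y \in qJ n k J @: A) = (qJ n k J y \in A).
Proof.
have e : y = qJ n k J (qJ n k J y) by rewrite !qJE fJK.
by rewrite {1}e mem_imset //; apply: perm_inj.
Qed.

Lemma card_W n m k (J : {set 'I_n}) : (k <= m)%N -> (m + m <= n)%N ->
  J \subset [set j : 'I_n | (j < k)%N] -> #|Wset n m k J| = (m - k + #|J|)%N.
Proof.
move=> km mmn JL.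
have := cardsID J (Wset n m k J).
have -> : Wset n m k J :&: J = J.
  apply/setIidPr/subsetP => x xJ; move: (subsetP JL x xJ); rewrite !inE xJ /= => xk.
  lia.
have -> : Wset n m k J :\: J = [set x : 'I_n | (n - m <= x < n - k)%N].
  apply/setP => x; rewrite !inE.
  case xJ: (x \in J) => /=.
    by move: (subsetP JL x xJ); rewrite inE => xk; apply/esym/negbTE; rewrite negb_and -!ltnNge; lia.
  by rewrite andbC.
rewrite card_itv; last by apply/andP; split; lia.
move=> <-; lia.
Qed.

Lemma inter_card n m k (J X : {set 'I_n}) : (k <= m)%N -> (m + m <= n)%N ->
  J \subset [set j : 'I_n | (j < k)%N] -> X \subset ~: Sset n k ->
  #|Omega n m :&: qJ n k J @: (Sset n k :|: X)| = (k - #|J| + #|X :&: Wset n m k J|)%N.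
Proof.
move=> km mmn JL XS.
have qq : forall x, qJ n k J (qJ n k J x) = x by move=> x; rewrite !qJE fJK.
have -> : #|Omega n m :&: qJ n k J @: (Sset n k :|: X)| =
          #|qJ n k J @: Omega n m :&: (Sset n k :|: X)|.
  rewrite -(card_imset (Omega n m :&: qJ n k J @: (Sset n k :|: X)) (@perm_inj _ (qJ n k J))).
  by apply: eq_card => x; rewrite !(in_setI, memq) qq.
set W0 := qJ n k J @: Omega n m.
have cW0 : #|W0| = m by rewrite card_imset ?card_Om //; [lia | apply: perm_inj].
have W0S : W0 :\: Sset n k = Wset n m k J.
  apply/setP => x; rewrite in_setD memq qJE /fJ !inE -ltnNge.
  case xl: (x < n - k)%N => //=.
  case xJ: (x \in J) => /=.
    move: (subsetP JL x xJ); rewrite inE => xk.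
    have -> : (k + k <= n)%N by lia.
    by rewrite xk /= val_upo //; lia.
  have -> : (n - k <= x)%N = false by rewrite leqNgt xl.
  by rewrite !andbF /=.
have := cardsID (Sset n k) W0; rewrite cW0 W0S card_W // => e1.
have e2 : W0 :&: (Sset n k :|: X) = (W0 :&: Sset n k) :|: (X :&: Wset n m k J).
  rewrite -W0S; apply/setP => x; rewrite !(in_setI, in_setU, in_setD).
  have := subsetP XS x; rewrite in_setC.
  by case: (x \in Sset n k); case: (x \in X); case: (x \in W0); finb.
have e3 : W0 :&: Sset n k :&: (X :&: Wset n m k J) = set0.
  apply/setP => x; rewrite !in_setI in_set0.
  have := subsetP XS x; rewrite in_setC.
  by case: (x \in Sset n k); case: (x \in X) => h; rewrite ?andbF ?andFb //; move: (h isT).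
rewrite e2 cardsU e3 cards0 subn0; lia.
Qed.


Lemma step1 n m k (b : nat -> algC) : (m <= n)%N ->
  Bmat n m b (piM n m (young_c n k)) (Omega n m) =
  \sum_(q in colgroup n k) \sum_(p in rowgroup n k)
     (-1) ^+ odd_perm q * b #|Omega n m :&: (p * q)%g @: Omega n m|.
Proof.
move=> mn.
rewrite /Bmat /piM.
under eq_bigr => tau _ do rewrite mulr_sumr.
rewrite exchange_big /=.
rewrite (eq_bigr (fun g => young_c n k g * b #|Omega n m :&: g @: Omega n m|)); last first.
  move=> g _.
  have cg : #|g @: Omega n m| == m by rewrite card_imset ?card_Om //; apply: perm_inj.
  rewrite (bigD1 (g @: Omega n m)) //= eqxx mulr1 mulrC big1 ?addr0 //.
  by move=> tau /andP[_ /negbTE]; rewrite eq_sym => ->; rewrite !mulr0.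
rewrite /young_c.
under eq_bigr => g _ do rewrite mulr_suml.
rewrite exchange_big /=; apply: eq_bigr => q _.
under eq_bigr => g _ do rewrite mulr_suml.
rewrite exchange_big /=; apply: eq_bigr => p _.
rewrite (bigD1 (p * q)%g) //= eqxx mulr1 big1 ?addr0 //.
by move=> g /negbTE ->; rewrite mulr0 mul0r.
Qed.


Theorem lemma6 (n m k : nat) (b : nat -> algC) :
  (0 < n)%N -> (m <= n./2)%N -> (k <= m)%N ->
  Bmat n m b (piM n m (young_c n k)) (Omega n m) =
  \sum_(0 <= v < k.+1) \sum_(0 <= w < (m - k).+1)
    (-1) ^+ v * ('C(k, v) * 'C(m - k, w) * 'C(n - m - v, w) * w`!
      * 'C(m - k + v, m - k - w) * (m - k - w)`! * k`! * (n - m)`!)%:R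
      * b (m - v - w)%N.
Proof.
move=> n0 mh km.
have mmn : (m + m <= n)%N by move: mh; rewrite geq_half_double -addnn.
have mn : (m <= n)%N by lia.
have kk : (k + k <= n)%N by lia.
rewrite step1 //.
set K := ((n - m)`! * (m - k)`! * k`!)%N.
set L := [set j : 'I_n | (j < k)%N].
set D := [set X : {set 'I_n} | (X \subset ~: Sset n k) && (#|X| == m - k)%N].
have E1 : forall q, \sum_(p in rowgroup n k)
     (-1) ^+ odd_perm q * b #|Omega n m :&: (p * q)%g @: Omega n m| =
   (-1) ^+ odd_perm q * (K%:R * \sum_(X in D) b #|Omega n m :&: q @: (Sset n k :|: X)|).
  move=> q; rewrite -mulr_sumr; congr (_ * _).
  rewrite -(@sumR n m k (fun Y => b #|Omega n m :&: q @: Y|) km mmn).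
  by apply: eq_bigr => p _; rewrite imsetM.
rewrite (eq_bigr _ (fun q _ => E1 q)).
have CE : colgroup n k = qJ n k @: powerset L.
  apply/setP => q; apply/idP/imsetP => [hq | [J _ ->]]; last exact: qJ_col.
  exists (Jof n k q); last exact: (@col_qJ n k q n0 kk hq).
  by rewrite powersetE; apply/subsetP => j; rewrite !inE => /andP[].
rewrite CE big_imset /=; last first.
  move=> J J'; rewrite !powersetE => hJ hJ' e.
  by rewrite -(@Jof_qJ n k J n0 kk hJ) -(@Jof_qJ n k J' n0 kk hJ') e.
pose G2 (v : nat) := (-1) ^+ v * (K%:R * \sum_(t < (m - k).+1)
     ('C(m - k + v, t) * 'C(n - m - v, m - k - t))%:R * b (k - v + t)%N).
have E2 : forall J, J \in powerset L ->
   (-1) ^+ odd_perm (qJ n k J) *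
     (K%:R * \sum_(X in D) b #|Omega n m :&: qJ n k J @: (Sset n k :|: X)|) = G2 #|J|.
  move=> J; rewrite powersetE => JL.
  rewrite (@qJ_odd n k J n0 kk JL) signr_odd /G2; congr (_ * (_ * _)).
  rewrite (eq_bigr (fun X => b (k - #|J| + #|X :&: Wset n m k J|)%N)); last first.
    by move=> X; rewrite inE => /andP[XS _]; rewrite inter_card.
  rewrite (@group_sum _ (mem D) (fun X => #|X :&: Wset n m k J|) (m - k).+1
             (fun t => b (k - #|J| + t)%N)); last first.
    move=> X hX; have : X \in D := hX; rewrite inE => /andP[_ /eqP cX]; rewrite ltnS -cX; apply: subset_leq_card.
    exact: subsetIl.
  apply: eq_bigr => t _; congr (_%:R * _).
  rewrite -(@card_W n m k J) //.
  have WU : Wset n m k J \subset ~: Sset n k.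
    by apply/subsetP => x; rewrite !inE -ltnNge => /andP[].
  have -> : (n - m - #|J| = #|~: Sset n k| - #|Wset n m k J|)%N. rewrite card_notS ?card_W //. move: km; set c := #|J|; clear; lia. lia.
  rewrite -count_split //; last by have := ltn_ord t; lia.
  by apply: eq_card => X; rewrite !inE.
rewrite (eq_bigr _ E2).
rewrite (@group_sum _ (mem (powerset L)) (fun J => #|J|) k.+1 G2); last first.
  move=> J; rewrite inE powersetE => JL; rewrite ltnS.
  by apply: (leq_trans (subset_leq_card JL)); rewrite /L card_ltn; lia.
rewrite big_mkord; apply: eq_bigr => v _.
have cv : #|[set J : {set 'I_n} | J \in powerset L & #|J| == v]| = 'C(k, v).
  have cL : #|L| = k by rewrite card_ltn; lia.
  rewrite -[X in 'C(X, _)]cL -cards_draws; apply: eq_card => J; by rewrite !inE.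
rewrite cv /G2 big_mkord.
rewrite -(big_mkord xpredT (fun t => ('C(m - k + v, t) * 'C(n - m - v, m - k - t))%:R * b (k - v + t)%N)).
rewrite big_nat_rev big_mkord /= !mulr_sumr; apply: eq_bigr => w _.
have wle : (w <= m - k)%N by have := ltn_ord w; lia.
have vle : (v <= k)%N by have := ltn_ord v; lia.
have -> : (0 + (m - k).+1 - w.+1 = m - k - w)%N by lia.
have -> : (k - v + (m - k - w) = m - v - w)%N by lia.
have -> : (m - k - (m - k - w) = w)%N by lia.
have hf := bin_fact wle.
rewrite /K -hf.
rewrite !natrM; ring.
Qed.
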